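(* Let $\hat\alpha\in\{-1,-2,\dots\}$ and let $\mathcal F=(F_1,F_2)$ be a pair of finite sets of positive integers. Then the polynomials $L_n^{\hat\alpha;\mathcal F}$, $n\in\sigma_{\mathcal F}$, are common eigenfunctions of the second order differential operator $D_{\mathcal F}=x\partial^2+h_1(x)\partial+h_0(x)$, $\partial=d/dx$, where $h_1(x)=\hat\alpha+k+1-x-2x\frac{(\Omega^{\hat\alpha}_{\mathcal F})'(x)}{\Omega^{\hat\alpha}_{\mathcal F}(x)}$ and $h_0(x)=-k_1-u_{\mathcal F}+(x-\hat\alpha-k)\frac{(\Omega^{\hat\alpha}_{\mathcal F})'(x)}{\Omega^{\hat\alpha}_{\mathcal F}(x)}+x\frac{(\Omega^{\hat\alpha}_{\mathcal F})''(x)}{\Omega^{\hat\alpha}_{\mathcal F}(x)}$; more precisely $D_{\mathcal F}(L_n^{\hat\alpha;\mathcal F})=-n\,L_n^{\hat\alpha;\mathcal F}$ for $n\in\sigma_{\mathcal F}$.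
   Context: $k_i=|F_i|$, $k=k_1+k_2$. Laguerre: $L_n^\alpha(x)=\sum_{j=0}^n\frac{(-x)^j}{j!}\binom{n+\alpha}{n-j}$. $u_{\mathcal F}=\sum_{f\in F_1}f+\sum_{f\in F_2}f-\binom{k_1+1}{2}-\binom{k_2}{2}$; $\sigma_{\mathcal F}=\{u_{\mathcal F},u_{\mathcal F}+1,\dots\}\setminus\{u_{\mathcal F}+f:f\in F_1\}$. $L_n^{\hat\alpha;\mathcal F}(x)$ is the $(k+1)\times(k+1)$ determinant with first row $\big((L^{\hat\alpha}_{n-u_{\mathcal F}})^{(j-1)}(x)\big)_{j=1}^{k+1}$, then rows $\big((L_f^{\hat\alpha})^{(j-1)}(x)\big)_j$ for $f\in F_1$ (increasing), then rows $\big(L_f^{\hat\alpha+j-1}(-x)\big)_j$ for $f\in F_2$. $\Omega^{\hat\alpha}_{\mathcal F}(x)$ is the $k\times k$ determinant with rows $\big((L_f^{\hat\alpha})^{(j-1)}(x)\big)_{j=1}^k$, $f\in F_1$, followed by rows $\big(L_f^{\hat\alpha+j-1}(-x)\big)_{j=1}^k$, $f\in F_2$. *)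

(* Defs.v *)
From HB Require Import structures.
From mathcomp Require Import all_boot all_order all_algebra.
Set Implicit Arguments. Unset Strict Implicit. Unset Printing Implicit Defensive.
Import Order.TTheory GRing.Theory Num.Theory.
Local Open Scope ring_scope.

Section Defs.
Variable R : numFieldType.

Definition gbinom (a : R) (m : nat) : R :=
  (\prod_(i < m) (a - i%:R)) / (m`!)%:R.

Definition laguerre (a : R) (n : nat) : {poly R} :=
  \sum_(j < n.+1) (((-1) ^+ j / (j`!)%:R) * gbinom (n%:R + a) (n - j)) *: 'X^j.

(* u_F = sum F1 + sum F2 - binom(k1+1,2) - binom(k2,2)  (always >= 0) *)
Definition uF (F1 F2 : seq nat) : nat :=
  (\sum_(f <- F1) f + \sum_(f <- F2) f - ('C((size F1).+1, 2) + 'C(size F2, 2)))%N.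

Definition in_sigmaF (F1 F2 : seq nat) (n : nat) : bool :=
  (uF F1 F2 <= n)%N && ((n - uF F1 F2)%N \notin F1).

(* entry (row r, column j; both 0-indexed) of the rows indexed by F1 then F2:
   rows for f in F1: (L_f^a)^{(j)}(x); rows for f in F2: L_f^{a+j}(-x) *)
Definition rowF (a : int) (F1 F2 : seq nat) (r j : nat) : {poly R} :=
  if (r < size F1)%N then (laguerre a%:~R (nth 0%N F1 r))^`(j)
  else (laguerre (a + j%:Z)%:~R (nth 0%N F2 (r - size F1))) \Po (- 'X).

Definition OmegaF (a : int) (F1 F2 : seq nat) : {poly R} :=
  \det (\matrix_(i < size F1 + size F2, j < size F1 + size F2)
          rowF a F1 F2 i j).

Definition LaguerreF (a : int) (F1 F2 : seq nat) (n : nat) : {poly R} :=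
  \det (\matrix_(i < (size F1 + size F2).+1, j < (size F1 + size F2).+1)
          (if i == 0 :> nat then (laguerre a%:~R (n - uF F1 F2)%N)^`(j)
           else rowF a F1 F2 i.-1 j)).

(* coefficients of D_F, evaluated at a point x where Omega(x) != 0 *)
Definition h1F (a : int) (F1 F2 : seq nat) (x : R) : R :=
  let Om := OmegaF a F1 F2 in
  a%:~R + (size F1 + size F2)%:R + 1 - x - 2 * x * (Om^`()).[x] / Om.[x].

Definition h0F (a : int) (F1 F2 : seq nat) (x : R) : R :=
  let Om := OmegaF a F1 F2 in
  - (size F1)%:R - (uF F1 F2)%:R
  + (x - a%:~R - (size F1 + size F2)%:R) * (Om^`()).[x] / Om.[x]
  + x * (Om^`(2)).[x] / Om.[x].

Definition DF (a : int) (F1 F2 : seq nat) (p : {poly R}) (x : R) : R :=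
  x * (p^`(2)).[x] + h1F a F1 F2 x * (p^`()).[x] + h0F a F1 F2 x * p.[x].

End Defs.

(* Main.v *)
Require Import Defs.
From HB Require Import structures.
From mathcomp Require Import all_boot all_order all_algebra ring zify.
Set Implicit Arguments. Unset Strict Implicit. Unset Printing Implicit Defensive.
Import Order.TTheory GRing.Theory Num.Theory.
Local Open Scope ring_scope.

Section Deriv.
Variable S : comNzRingType.
Variable D : S -> S.
Hypothesis DD : forall a b, D (a + b) = D a + D b.
Hypothesis DM : forall a b, D (a * b) = D a * b + a * D b.

Lemma D0 : D 0 = 0.
Proof. have h := DD 0 0; rewrite addr0 in h. by apply: (addrI (D 0)); rewrite addr0 -h. Qed.

Lemma DN a : D (- a) = - D a.
Proof.
have := DD a (-a); rewrite subrr D0 => /esym/eqP.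
by rewrite addrC addr_eq0 => /eqP.
Qed.

Lemma DB a b : D (a - b) = D a - D b.
Proof. by rewrite DD DN. Qed.

Lemma D1 : D 1 = 0.
Proof. have h := DM 1 1; rewrite !mulr1 mul1r in h. by apply: (addrI (D 1)); rewrite addr0 -h. Qed.

Lemma Dnat n : D n%:R = 0.
Proof. elim: n => [|n IH]; first by rewrite D0. by rewrite -addn1 natrD DD IH D1 addr0. Qed.

Lemma Dsign n : D ((-1) ^+ n) = 0.
Proof. elim: n => [|n IH]; first by rewrite expr0 D1. by rewrite exprS DM IH DN D1 !(mulr0, mul0r, oppr0, addr0). Qed.

Lemma Dsum (I : Type) (r : seq I) (P : pred I) (F : I -> S) :
  D (\sum_(i <- r | P i) F i) = \sum_(i <- r | P i) D (F i).
Proof. exact: (big_morph D DD D0). Qed.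

Lemma D_prod_seq (I : eqType) (r : seq I) (f : I -> S) : uniq r ->
  D (\prod_(i <- r) f i) = \sum_(i <- r) D (f i) * \prod_(j <- r | j != i) f j.
Proof.
elim: r => [|x r IH] /=; first by rewrite big_nil D1 big_nil.
case/andP => xr ur.
rewrite big_cons DM IH // big_cons mulr_sumr.
congr (_ + _).
  congr (_ * _); rewrite big_cons eqxx /= [RHS]big_seq_cond [LHS]big_seq_cond.
  apply: eq_bigl => j; case: (boolP (j \in r)) => //= jr.
  by apply/esym/negP => /eqP ejx; rewrite -ejx jr in xr.
rewrite [LHS]big_seq [RHS]big_seq; apply: eq_bigr => i ir.
rewrite big_cons.
have -> : (x != i). by apply/negP => /eqP exi; rewrite exi ir in xr.
by rewrite mulrCA.
Qed.

Lemma D_prod (I : finType) (f : I -> S) :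
  D (\prod_i f i) = \sum_i D (f i) * \prod_(j | j != i) f j.
Proof. by rewrite D_prod_seq // index_enum_uniq. Qed.

Lemma D_det n (A : 'M[S]_n) : D (\det A) =
  \sum_i \det (\matrix_(i', j) (if i' == i then D (A i' j) else A i' j)).
Proof.
rewrite /determinant Dsum.
under eq_bigr => s _ do rewrite DM Dsign mul0r add0r D_prod mulr_sumr.
rewrite exchange_big /=; apply: eq_bigr => i _; apply: eq_bigr => s _.
congr (_ * _); rewrite [RHS](bigD1 i) //= mxE eqxx; congr (_ * _).
by apply: eq_bigr => j /negbTE nji; rewrite mxE nji.
Qed.

Lemma D_det_col n (A : 'M[S]_n) : D (\det A) =
  \sum_j \det (\matrix_(i, j') (if j' == j then D (A i j') else A i j')).
Proof.
rewrite -det_tr D_det; apply: eq_bigr => j _.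
rewrite -det_tr; congr (\det _); apply/matrixP => i j'; rewrite !mxE.
by case: ifP.
Qed.

End Deriv.

Section Core.
Variable S : comNzRingType.
Variable D : S -> S.
Hypothesis DD : forall a b, D (a + b) = D a + D b.
Hypothesis DM : forall a b, D (a * b) = D a * b + a * D b.
Variables (X b : S).
Hypothesis DX : D X = 1.
Hypothesis Db : D b = -1.

Definition Dn j (f : S) := iter j D f.
Definition Top (f : S) := X * D (D f) + b * D f.

Lemma DnS j f : Dn j.+1 f = D (Dn j f).
Proof. by []. Qed.

Lemma DnT j f : Dn j (Top f) = X * Dn j.+2 f + (j%:R + b) * Dn j.+1 f - j%:R * Dn j f.
Proof.
elim: j => [|j IH]; first by rewrite /Top /= !mul0r subr0 add0r.
rewrite DnS IH !(DB DD, DD, DM) DX Db (Dnat DD DM) -!DnS.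
rewrite -[j.+1]addn1 natrD; ring.
Qed.

Lemma DnC j (l f : S) : D l = 0 -> Dn j (l * f) = l * Dn j f.
Proof. move=> Dl; elim: j => [|j IH] //; by rewrite DnS IH DM Dl mul0r add0r. Qed.

Variable k : nat.
Variable Y : 'I_k -> S.

Definition rowf (f : S) (i : 'I_k.+1) := if unlift ord0 i is Some i' then Y i' else f.
Definition Mf (f : S) : 'M[S]_k.+1 := \matrix_(i, j) Dn j (rowf f i).
Definition Acof (j : 'I_k.+1) := cofactor (Mf 0) ord0 j.
Definition Aof (j : nat) := if (j < k.+1)%N then Acof (inord j) else 0.
Definition WY := \det (\matrix_(i < k, j < k) Dn j (Y i)).

Lemma LE f : \det (Mf f) = \sum_(j < k.+1) Dn j f * Aof j.
Proof.
rewrite (expand_det_row _ ord0); apply: eq_bigr => j _.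
rewrite /Aof ltn_ord inord_val /Acof mxE /rowf unlift_none; congr (_ * _).
rewrite /cofactor.
have -> : row' ord0 (col' j (Mf f)) = row' ord0 (col' j (Mf 0)).
  by apply/matrixP => i j'; rewrite !mxE /rowf liftK.
by [].
Qed.

Lemma Lzero i : \det (Mf (Y i)) = 0.
Proof.
apply: (@determinant_alternate _ _ _ ord0 (lift ord0 i)); first exact: neq_lift.
by move=> j; rewrite !mxE /rowf unlift_none liftK.
Qed.

Lemma Atop : Aof k = (-1) ^+ k * WY.
Proof.
rewrite /Aof ltnSn /Acof /cofactor add0n.
have -> : inord k = ord_max :> 'I_k.+1 by apply: val_inj; rewrite /= inordK.
have -> : row' ord0 (col' ord_max (Mf 0)) = \matrix_(i < k, j < k) Dn j (Y i).
  by apply/matrixP => i j; rewrite !mxE /rowf liftK lift_max.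
by [].
Qed.

Lemma Asub : (0 < k)%N -> Aof k.-1 = (-1) ^+ k.-1 * D WY.
Proof.
move=> k0.
have hm : (k.-1 < k)%N by rewrite ltn_predL.
set jm := Ordinal hm.
rewrite /WY (D_det_col DD DM) (bigD1 jm) //= big1 ?addr0; last first.
  move=> j njm.
  have hj1 : (j.+1 < k)%N.
    have := ltn_ord j; rewrite leq_eqVlt => /orP [/eqP ej|//].
    move: njm; have -> : j = jm by apply: val_inj => /=; apply/eqP; rewrite -eqSS ej (prednK k0).
    by rewrite eqxx.
  rewrite -det_tr; apply: (@determinant_alternate _ _ _ j (Ordinal hj1)).
    by rewrite -(inj_eq val_inj) /= neq_ltn ltnSn.
  move=> i; rewrite !mxE eqxx /=.
  have -> : (Ordinal hj1 == j) = false by rewrite -(inj_eq val_inj) /= gtn_eqF.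
  by [].
rewrite /Aof ltnW ?ltnS // /Acof /cofactor add0n.
have -> : row' ord0 (col' (inord k.-1) (Mf 0)) =
  \matrix_(i, j') (if j' == jm then D (Dn j' (Y i)) else Dn j' (Y i)).
  apply/matrixP => i j; rewrite !mxE /rowf liftK /=.
  rewrite /bump inordK; last by rewrite ltnS ltnW.
  case: (eqVneq j jm) => [->|njm] /=; first by rewrite leqnn add1n.
  have : (j < k.-1)%N.
    have hj : (j <= k.-1)%N by rewrite -ltnS (prednK k0) ltn_ord.
    move: hj; rewrite leq_eqVlt => /orP [/eqP ej|//].
    move: njm; have -> : j = jm by apply: val_inj => /=; apply/eqP; rewrite ej.
    by rewrite eqxx.
  by move=> h; rewrite leqNgt h add0n.
rewrite inordK; last by rewrite ltnS ltnW.
congr (_ * _); congr (determinant _); apply/matrixP => i j; rewrite !mxE.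
by case: ifP.
Qed.

Definition Lf f := \sum_(j < k.+1) Dn j f * Aof j.
Definition beta := WY * (k%:R + b) - 2%:R * X * D WY.
Definition gam := X * D (D WY) - k%:R * WY - (k%:R - 1 + b) * D WY.
Definition Rt f := WY * X * D (D (Lf f)) + beta * D (Lf f) + gam * Lf f
   - WY * \sum_(j < k.+1) Dn j (Top f) * Aof j.
Definition pc j := WY * X * D (D (Aof j)) + beta * D (Aof j) + gam * Aof j + j%:R * WY * Aof j.
Definition qc j := 2%:R * WY * X * D (Aof j) + (beta - WY * (j%:R + b)) * Aof j.
Definition cc j := pc j + (if j is j'.+1 then qc j' else 0).

Lemma DL f : D (Lf f) = \sum_(j < k.+1) (Dn j.+1 f * Aof j + Dn j f * D (Aof j)).
Proof. by rewrite /Lf (Dsum DD); apply: eq_bigr => j _; rewrite DM. Qed.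

Lemma DDL f : D (D (Lf f)) = \sum_(j < k.+1)
  (Dn j.+2 f * Aof j + 2%:R * (Dn j.+1 f * D (Aof j)) + Dn j f * D (D (Aof j))).
Proof.
rewrite DL (Dsum DD); apply: eq_bigr => j _; rewrite !(DD, DM) -!DnS.
rewrite mulr2n mulrDl !mul1r; ring.
Qed.

Lemma Rt_expand f : Rt f = \sum_(j < k.+1) (Dn j f * pc j + Dn j.+1 f * qc j).
Proof.
rewrite /Rt DDL DL /Lf.
rewrite [\sum_(j < k.+1) Dn j (Top f) * Aof j](eq_bigr (fun j : 'I_k.+1 =>
  (X * Dn j.+2 f + (j%:R + b) * Dn j.+1 f - j%:R * Dn j f) * Aof j)); last first.
  by move=> j _; rewrite DnT.
rewrite !mulr_sumr -!big_split -sumrB /=; apply: eq_bigr => j _.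
rewrite /pc /qc; ring.
Qed.

Lemma Aof_out j : (k < j)%N -> Aof j = 0.
Proof. by move=> h; rewrite /Aof ltnS leqNgt h. Qed.

Lemma pc_top : pc k.+1 = 0.
Proof. by rewrite /pc Aof_out // !(D0 DD) !(mulr0, addr0). Qed.

Lemma Rt_cc f : Rt f = \sum_(j < k.+2) cc j * Dn j f.
Proof.
rewrite Rt_expand big_split /=.
rewrite [RHS](eq_bigr (fun j : 'I_k.+2 => pc j * Dn j f +
   (if nat_of_ord j is j'.+1 then qc j' else 0) * Dn j f)); last first.
  by move=> j _; rewrite /cc mulrDl.
rewrite big_split /= [X in _ = X + _]big_ord_recr /= pc_top mul0r addr0.
rewrite [X in _ = _ + X]big_ord_recl /= mul0r add0r.
congr (_ + _); apply: eq_bigr => j _; first by rewrite mulrC.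
by rewrite mulrC.
Qed.

Lemma DnsW j : D ((-1) ^+ j * WY) = (-1) ^+ j * D WY.
Proof. by rewrite DM (Dsign DD DM) mul0r add0r. Qed.

Lemma cc_top : cc k.+1 = 0.
Proof.
rewrite /cc pc_top add0r /qc Atop DnsW /beta; ring.
Qed.

Lemma det_k0 n (A : 'M[S]_n) : n = 0%N -> \det A = 1.
Proof. by move=> n0; subst n; apply: det_mx00. Qed.

Lemma cc_k : cc k = 0.
Proof.
have [k0|kpos] := posnP k.
  have W1 : WY = 1 by apply: det_k0.
  rewrite /cc [in X in _ + X]k0 addr0 /pc Atop W1 /gam W1 (D1 DM) (D0 DD) k0 expr0.
  by rewrite !mulr1 (D1 DM) (D0 DD); ring.
have -> : cc k = pc k + qc k.-1.
  by rewrite /cc; move: kpos; case: (k).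
have sk : (-1) ^+ k = - (-1) ^+ k.-1 :> S by rewrite -{1}(prednK kpos) exprS mulN1r.
have nk : k%:R = k.-1%:R + 1 :> S by rewrite -{1}(prednK kpos) -addn1 natrD.
rewrite /pc /qc Atop (Asub kpos) !DnsW /beta /gam sk nk.
rewrite !DM !(DN DD) !(Dsign DD DM).
ring.
Qed.

Lemma Rt_eig f l : D l = 0 -> Top f = l * f ->
  Rt f = WY * X * D (D (Lf f)) + beta * D (Lf f) + gam * Lf f - WY * (l * Lf f).
Proof.
move=> Dl Tf; rewrite /Rt; congr (_ - _ * _); rewrite /Lf mulr_sumr.
by apply: eq_bigr => j _; rewrite Tf (DnC _ _ Dl) mulrA.
Qed.

Lemma Rt_low f : Rt f = \sum_(j < k) cc j * Dn j f.
Proof.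
rewrite Rt_cc big_ord_recr /= cc_top mul0r addr0 big_ord_recr /= cc_k mul0r addr0.
by [].
Qed.

Variable lam : 'I_k -> S.
Hypothesis Dlam : forall i, D (lam i) = 0.
Hypothesis TY : forall i, Top (Y i) = lam i * Y i.

Lemma RtY i : Rt (Y i) = 0.
Proof.
rewrite (Rt_eig (Dlam i) (TY i)) /Lf -LE Lzero (D0 DD) (D0 DD).
by rewrite !(mulr0, addr0, subr0).
Qed.

Variable R : fieldType.
Variable ev : {rmorphism S -> R}.

Lemma cc_zero : ev WY != 0 -> forall j : 'I_k, ev (cc j) = 0.
Proof.
move=> nz.
pose N := \matrix_(i < k, j < k) ev (Dn j (Y i)).
pose v := \col_(j < k) ev (cc j).
have Nu : N \in unitmx.
  rewrite unitmxE unitfE.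
  have -> : \det N = ev WY.
    rewrite /WY -det_map_mx; congr (determinant _).
    by apply/matrixP => i j; rewrite !mxE.
  exact: nz.
have Nv : N *m v = 0.
  apply/matrixP => i j0; rewrite !mxE.
  transitivity (ev (Rt (Y i))); last by rewrite RtY rmorph0.
  rewrite Rt_low rmorph_sum.
  by apply: eq_bigr => j _; rewrite !mxE rmorphM mulrC.
have v0 : v = 0 by rewrite -(mulKmx Nu v) Nv mulmx0.
by move=> j; have := congr1 (fun M : 'cV_k => M j ord0) v0; rewrite !mxE.
Qed.

Theorem core_main y0 lam0 : D lam0 = 0 -> Top y0 = lam0 * y0 -> ev WY != 0 ->
  ev (WY * X * D (D (\det (Mf y0))) + beta * D (\det (Mf y0)) + gam * \det (Mf y0))
  = ev lam0 * ev WY * ev (\det (Mf y0)).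
Proof.
move=> Dl0 T0 nz.
have := congr1 ev (Rt_eig Dl0 T0); rewrite Rt_low rmorph_sum.
rewrite big1 /Lf -?LE; last by move=> j _; rewrite rmorphM cc_zero // mul0r.
move/esym/eqP; rewrite rmorphB subr_eq0 => /eqP ->.
by rewrite !rmorphM mulrCA mulrA.
Qed.

End Core.

Section Lag.
Variable R : numFieldType.

Lemma nzfact i : (i`!)%:R != 0 :> R.
Proof. by rewrite pnatr_eq0 -lt0n fact_gt0. Qed.

Lemma nzS i : (i.+1)%:R != 0 :> R.
Proof. by rewrite pnatr_eq0. Qed.

Lemma gbinom0 (A : R) : gbinom A 0 = 1.
Proof. by rewrite /gbinom big_ord0 fact0 divr1. Qed.

Lemma gbinom_rec (A : R) r : r.+1%:R * gbinom A r.+1 = (A - r%:R) * gbinom A r.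
Proof.
rewrite /gbinom big_ord_recr /= factS natrM.
have := nzfact r; have := nzS r; move=> h1 h2.
field. by rewrite h2 addrC natr1 h1.
Qed.

Lemma gbinom_pascal (A : R) r : gbinom (A + 1) r.+1 = gbinom A r.+1 + gbinom A r.
Proof.
rewrite /gbinom big_ord_recl big_ord_recr /= factS natrM subr0.
have -> : \prod_(i < r) (A + 1 - (lift ord0 i)%:R) = \prod_(i < r) (A - i%:R).
  by apply: eq_bigr => i _; rewrite lift0 -addn1 natrD; ring.
have := nzfact r; have := nzS r; move=> h1 h2.
field. by rewrite h2 addrC natr1 h1.
Qed.

Definition lc (c : R) m i := ((-1) ^+ i / (i`!)%:R) * gbinom (m%:R + c) (m - i).

Lemma coef_lag c m i : (laguerre c m)`_i = if (i <= m)%N then lc c m i else 0.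
Proof.
rewrite /laguerre coef_sum.
under eq_bigr do rewrite coefZ coefXn.
case: ifP => him.
  have hi : (i < m.+1)%N by [].
  rewrite (bigD1 (Ordinal hi)) //= eqxx mulr1 big1 ?addr0 //.
  move=> j nj.
  have -> : (i == j :> nat) = false.
    by apply/negbTE; apply: contra nj => /eqP e; apply/eqP/val_inj.
  by rewrite mulr0.
rewrite big1 // => j _.
have -> : (i == j :> nat) = false.
  apply/negbTE/eqP => e; move: (ltn_ord j); rewrite -e ltnS him //.
by rewrite mulr0.
Qed.

Lemma lag_rel (c : R) m i : (i.+1%:R * (i%:R + c + 1)) * (laguerre c m)`_i.+1
   + (m%:R - i%:R) * (laguerre c m)`_i = 0.
Proof.
rewrite !coef_lag.
case: (ltngtP i m) => him.
  rewrite /lc.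
  set r := (m - i.+1)%N.
  have e1 : (m - i = r.+1)%N by rewrite /r -subSn // subSS.
  rewrite e1.
  have er : (m%:R - i%:R : R) = r.+1%:R by rewrite -natrB ?e1 // ltnW.
  have ea : (m%:R + c - r%:R : R) = i%:R + c + 1.
    by rewrite /r natrB // -natr1; ring.
  have g : gbinom (m%:R + c) r.+1 = (i%:R + c + 1) * gbinom (m%:R + c) r / r.+1%:R.
    have := gbinom_rec (m%:R + c) r; rewrite ea => <-.
    by field; rewrite addrC natr1 nzS.
  rewrite er g factS natrM exprS.
  have h1 := nzfact i; have h2 := nzS i; have h3 := nzS r.
  field. by rewrite !(addrC 1) !natr1 h1 h2 h3.
- by rewrite !mulr0 addr0.
- by rewrite him subrr mul0r mulr0 addr0.
Qed.

Lemma lag_ode (c : R) m : 'X * (laguerre c m)^`()^`() + ((c + 1)%:P - 'X) * (laguerre c m)^`()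
   + m%:R *: laguerre c m = 0.
Proof.
apply/polyP => i; rewrite coef0 mulrBl !(coefD, coefN, coefCM, coefXM, coefZ, coef_deriv).
case: i => [|j] /=.
  have h := lag_rel c m 0.
  rewrite mulr1n -[RHS]h; ring.
have h := lag_rel c m j.+1.
rewrite -[RHS]h; ring.
Qed.

Lemma lag_shift (c : R) m : laguerre (c + 1) m = laguerre c m - (laguerre c m)^`().
Proof.
apply/polyP => i; rewrite coefB coef_deriv !coef_lag.
case: (ltngtP i m) => him.
- rewrite /lc.
  set r := (m - i.+1)%N.
  have e1 : (m - i = r.+1)%N by rewrite /r -subSn // subSS.
  rewrite e1 addrA gbinom_pascal factS natrM exprS.
  have h1 := nzfact i; have h2 := nzS i.
  rewrite -mulr_natr.
  field. by rewrite !(addrC 1) !natr1 h1 h2.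
- by rewrite mul0rn subr0.
- by rewrite him /lc subnn !gbinom0 mul0rn subr0.
Qed.

End Lag.

Section Conc.
Variable R : numFieldType.
Local Notation S := {poly {poly R}}.

Definition Dp (P : S) : S := map_poly (@deriv R) P + 'X * P^`().

Lemma mapD (P Q : S) : map_poly (@deriv R) (P + Q) = map_poly (@deriv R) P + map_poly (@deriv R) Q.
Proof. by rewrite raddfD. Qed.

Lemma mapM (P Q : S) : map_poly (@deriv R) (P * Q) =
  map_poly (@deriv R) P * Q + P * map_poly (@deriv R) Q.
Proof.
apply/polyP => i; rewrite coefD coef_map !coefM raddf_sum -big_split.
by apply: eq_bigr => j _; rewrite /= !coef_map /= derivM.
Qed.

Lemma DpD P Q : Dp (P + Q) = Dp P + Dp Q.
Proof. rewrite /Dp mapD derivD; ring. Qed.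

Lemma DpM P Q : Dp (P * Q) = Dp P * Q + P * Dp Q.
Proof. rewrite /Dp mapM derivM; ring. Qed.

Lemma Dp_C q : Dp q%:P = (q^`())%:P.
Proof. by rewrite /Dp map_polyC derivC mulr0 addr0. Qed.

Lemma map_Xn m : map_poly (@deriv R) 'X^m = 0.
Proof.
apply/polyP => i; rewrite coef_map coefXn coef0.
by case: (i == m); rewrite /= ?polyC1 ?derivC // -polyC1 derivC.
Qed.

Lemma Dp_XnC m q : Dp ('X^m * q%:P) = 'X^m * (q *+ m + q^`())%:P.
Proof.
rewrite DpM Dp_C /Dp map_Xn add0r derivXn polyCD polyCMn.
case: m => [|m] /=; first by rewrite !mulr0n mulr0 mul0r !add0r.
rewrite !exprS; ring.
Qed.

Lemma F2step (c : R) f : laguerre (c + 1) f \Po (-'X) =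
  (laguerre c f \Po (-'X)) + (laguerre c f \Po (-'X))^`().
Proof. rewrite lag_shift comp_polyB deriv_comp derivN derivX mulrN1; ring. Qed.

Lemma psi_ode (c : R) f : let psi := laguerre c f \Po (-'X) in
  'X * psi^`()^`() + ((c + 1)%:P + 'X) * psi^`() = f%:R * psi.
Proof.
move=> psi.
have h := congr1 (fun p => p \Po (-'X)) (lag_ode c f).
rewrite /= comp_poly0 !comp_polyD !comp_polyM comp_polyX comp_polyB comp_polyC comp_polyZ in h.
rewrite comp_polyX scaler_nat in h.
rewrite /psi !deriv_comp derivN derivX mulrN1 derivN deriv_comp derivN derivX mulrN1.
apply/eqP; rewrite -subr_eq0; apply/eqP.
rewrite -[RHS]oppr0 -h -mulr_natl; ring.
Qed.

Lemma det_gauge n (G : 'I_n -> nat) (B : 'M[{poly R}]_n) :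
  \det (\matrix_(i, j) ('X^(G i) * (B i j)%:P) : 'M[S]_n) = 'X^(\sum_i G i) * (\det B)%:P.
Proof.
have -> : (\matrix_(i, j) ('X^(G i) * (B i j)%:P) : 'M[S]_n) =
    diag_mx (\row_i 'X^(G i)) *m map_mx polyC B.
  by apply/matrixP => i j; rewrite mul_diag_mx !mxE.
rewrite det_mulmx det_diag det_map_mx -prodrXr; congr (_ * _).
by apply: eq_bigr => i _; rewrite mxE.
Qed.

Lemma DnC0 q j : Dn Dp j q%:P = (q^`(j))%:P.
Proof. elim: j => [|j IH] //; by rewrite DnS IH Dp_C derivnS. Qed.

Variable a : int.
Variables F1 F2 : seq nat.
Local Notation k1 := (size F1).
Local Notation k2 := (size F2).
Local Notation k := (size F1 + size F2)%N.

Definition gE (i : nat) : nat := if (i < k1)%N then 0%N else 1%N.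
Definition Yf (i : 'I_k) : S := 'X^(gE i) * (rowF R a F1 F2 i 0)%:P.

Lemma row_step i j : rowF R a F1 F2 i j.+1 = rowF R a F1 F2 i j *+ gE i + (rowF R a F1 F2 i j)^`().
Proof.
rewrite /rowF /gE; case: ifP => _; first by rewrite mulr0n add0r derivnS.
rewrite mulr1n.
have -> : (a + j.+1%:Z)%:~R = (a + j%:Z)%:~R + 1 :> R.
  by rewrite -[j.+1]addn1 PoszD addrA rmorphD. 
exact: F2step.
Qed.

Lemma DnY i j : Dn Dp j (Yf i) = 'X^(gE i) * (rowF R a F1 F2 i j)%:P.
Proof.
elim: j => [|j IH] //.
by rewrite DnS IH Dp_XnC row_step.
Qed.

Definition Xs : S := ('X : {poly R})%:P.
Definition bb : S := ((a%:~R + 1 : R)%:P)%:P - Xs.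

Lemma polyC_comb (A B : {poly R}) (c : R) :
  Xs * A%:P + (c%:P%:P - Xs) * B%:P = ('X * A + (c%:P - 'X) * B)%:P.
Proof. by rewrite /Xs polyCD !polyCM polyCB. Qed.

Lemma TopC m : Top Dp Xs bb (laguerre a%:~R m)%:P = (- (m%:R : R))%:P%:P * (laguerre a%:~R m)%:P.
Proof.
rewrite /Top !Dp_C /bb polyC_comb.
have h := lag_ode (a%:~R : R) m.
rewrite -polyCM; congr (_%:P).
rewrite mul_polyC scaleNr; apply/eqP; rewrite -subr_eq0 opprK; apply/eqP.
exact: h.
Qed.

Definition lamY (i : nat) : R := if (i < k1)%N then - (nth 0%N F1 i)%:R
  else a%:~R + 1 + (nth 0%N F2 (i - k1))%:R.

Lemma TopY (i : 'I_k) : Top Dp Xs bb (Yf i) = (lamY i)%:P%:P * Yf i.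
Proof.
rewrite /Yf /gE /lamY /rowF; case: ifP => hi.
  by rewrite expr0 !mul1r /=; apply: TopC.
rewrite addr0 /Top !Dp_XnC !mulr1n.
set psi := laguerre _ _ \Po _.
transitivity ('X^1 * (Xs * (psi + psi^`() + (psi + psi^`())^`())%:P + bb * (psi + psi^`())%:P)).
  by ring.
rewrite /bb polyC_comb mulrCA -polyCM; congr (_ * _%:P).
have h := psi_ode (a%:~R : R) (nth 0%N F2 (i - k1)).
rewrite -/psi in h.
simpl in h. rewrite !polyCD polyC_natr in h *. rewrite [RHS]mulrDl -h derivD; ring.
Qed.

Lemma sum_gE : (\sum_(i < k) gE i = k2)%N.
Proof.
rewrite big_split_ord /= big1 ?add0n; last by move=> i _; rewrite /gE /= ltn_ord.
rewrite (eq_bigr (fun _ => 1%N)); last by move=> i _; rewrite /gE /= ltnNge leq_addr.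
by rewrite sum1_card card_ord.
Qed.

End Conc.

Theorem mainTheorem12 (R : numFieldType) (a : int) (F1 F2 : seq nat) :
  a < 0 ->
  sorted ltn F1 -> sorted ltn F2 ->
  all (fun f => 0 < f)%N F1 -> all (fun f => 0 < f)%N F2 ->
  forall n : nat, in_sigmaF F1 F2 n ->
  forall x : R, (OmegaF R a F1 F2).[x] != 0 ->
    DF a F1 F2 (LaguerreF R a F1 F2 n) x = - n%:R * (LaguerreF R a F1 F2 n).[x].
Proof.
move=> _ _ _ _ _ n hn x hO.
set u := uF F1 F2.
have hun : (u <= n)%N by case/andP: hn.
pose ev := (horner_eval x \o horner_eval (1 : {poly R})) : {rmorphism {poly {poly R}} -> R}.
have evXC m q : ev ('X^m * q%:P) = q.[x].
  by rewrite /ev /= !horner_evalE hornerM hornerXn expr1n mul1r hornerC.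
have Dl0 : Dp ((- ((n - u)%:R : R))%:P%:P) = 0 by rewrite Dp_C derivC.
have T0 := @TopC R a (n - u).
have Dlam : forall i, Dp ((lamY R a F1 F2 i)%:P%:P) = 0.
  by move=> i; rewrite Dp_C derivC.
have DX : Dp (Xs R) = 1 by rewrite /Xs Dp_C derivX.
have Db : Dp (bb R a) = -1.
  by rewrite /bb (DB (@DpD R)) Dp_C derivC DX sub0r.
have WYe : WY (@Dp R) (@Yf R a F1 F2) = 'X^(size F2) * (OmegaF R a F1 F2)%:P.
  rewrite /WY.
  have -> : \matrix_(i, j) Dn (@Dp R) j (@Yf R a F1 F2 i) =
     \matrix_(i, j) ('X^(gE F1 i) *
        ((\matrix_(i', j') rowF R a F1 F2 i' j' : 'M_(size F1 + size F2)) i j)%:P)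
     :> 'M_(size F1 + size F2).
    by apply/matrixP => i j; rewrite !mxE DnY.
  by rewrite det_gauge sum_gE.
set y0 := (laguerre (a%:~R : R) (n - u))%:P.
have W0e : \det (Mf (@Dp R) (@Yf R a F1 F2) y0) = 'X^(size F2) * (LaguerreF R a F1 F2 n)%:P.
  pose G' := fun i : 'I_(size F1 + size F2).+1 => if i == 0 :> nat then 0%N else gE F1 i.-1.
  have -> : Mf (@Dp R) (@Yf R a F1 F2) y0 =
     \matrix_(i, j) ('X^(G' i) *
        ((\matrix_(i', j') (if i' == 0 :> nat then (laguerre a%:~R (n - uF F1 F2)%N)^`(j')
           else rowF R a F1 F2 i'.-1 j') : 'M_((size F1 + size F2).+1)) i j)%:P).
    apply/matrixP => i j; rewrite !mxE /rowf /G'.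
    case: (unliftP ord0 i) => [i' ->|->] /=.
      by rewrite DnY add0n.
    by rewrite DnC0 expr0 mul1r.
  rewrite det_gauge big_ord_recl /= add0n.
  rewrite (eq_bigr (fun i : 'I_(size F1 + size F2) => gE F1 i)); last by move=> i _; rewrite /G' lift0.
  by rewrite sum_gE.
have nzW : ev (WY (@Dp R) (@Yf R a F1 F2)) != 0 by rewrite WYe evXC.
have := core_main (@DpD R) (@DpM R) DX Db (lam := fun i => (lamY R a F1 F2 i)%:P%:P)
  (fun i => Dlam i) (@TopY R a F1 F2) (ev := ev) Dl0 T0 nzW.
have evX1 : ev 'X = 1 by rewrite /ev /= !horner_evalE hornerX hornerC.
have evP q : ev q%:P = q.[x] by rewrite /ev /= !horner_evalE hornerC.
rewrite -/y0 W0e /beta /gam WYe !Dp_XnC /Xs /bb.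
rewrite !(rmorphD, rmorphB, rmorphM, rmorphN, rmorphXn, rmorph_nat, evX1, evP) /=.
rewrite !(hornerD, hornerMn, derivD, derivMn, hornerC, hornerX, expr1n, mul1r, hornerN).
rewrite natrB // => E.
rewrite /DF /h1F /h0F -/u !derivnS derivn0 natrD.
set o0 := (OmegaF R a F1 F2).[x] in E hO *.
set o1 := ((OmegaF R a F1 F2)^`()).[x] in E *.
set o2 := ((OmegaF R a F1 F2)^`()^`()).[x] in E *.
set l0 := (LaguerreF R a F1 F2 n).[x] in E *.
set l1 := ((LaguerreF R a F1 F2 n)^`()).[x] in E *.
set l2 := ((LaguerreF R a F1 F2 n)^`()^`()).[x] in E *.
move/eqP: E; rewrite -subr_eq0 => /eqP E.
apply/eqP; rewrite -subr_eq0; apply/eqP; apply: (mulfI hO); rewrite mulr0 -[RHS]E.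
by field.
Qed.
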